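(* Let $m$ be a positive integer and let $0\le a<m$ be an integer that is a sum of $3$ squares modulo $m$ (i.e. $z_1^2+z_2^2+z_3^2\equiv a\pmod m$ for some integers $z_i$). Then there exists a square-free integer $a'\in[1,5m]$ such that $a'$ is a sum of $3$ squares modulo $m$ and such that the following implication holds: if there exist a constant $c>0$ and infinitely many positive integers $n'\equiv a' \pmod m$ with $r_3(n')\ge c\sqrt{n'}\log\log n'$, then there exist a constant $c'>0$ depending only on $c$ and $m$ and infinitely many positive integers $n\equiv a\pmod m$ with $r_3(n)\ge c'\sqrt{n}\log\log n$.
   Context: For a positive integer $n$, $r_3(n) := |\{(x,y,z)\in\mathbb{Z}^3 : x^2+y^2+z^2=n\}|$. *)

(* Defs.v *)
From Stdlib Require Import ZArith Reals List.
Import ListNotations.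
Open Scope Z_scope.

Definition zrange (k : Z) : list Z :=
  map (fun i => Z.of_nat i - k) (seq 0 (Z.to_nat (2 * k + 1))).

(* r_3(n) = #{(x,y,z) in Z^3 : x^2+y^2+z^2 = n}.  Any solution has
   |x|,|y|,|z| <= n, so it suffices to search the box [-n,n]^3. *)
Definition r3 (n : Z) : nat :=
  length (filter (fun t : Z * Z * Z =>
                    let '(x, y, z) := t in Z.eqb (x*x + y*y + z*z) n)
                 (list_prod (list_prod (zrange n) (zrange n)) (zrange n))).

Definition sum3sq_mod (m a : Z) : Prop :=
  exists z1 z2 z3 : Z, (z1^2 + z2^2 + z3^2) mod m = a mod m.

Definition squarefree (a : Z) : Prop :=
  forall d : Z, (d * d | a) -> d * d = 1.

Definition inf_many_large (m b : Z) (c : R) : Prop :=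
  forall N : Z, exists n : Z, N < n /\ 0 < n /\ n mod m = b mod m /\
    (INR (r3 n) >= c * sqrt (IZR n) * ln (ln (IZR n)))%R.

(* Main.v *)
Require Import Defs.
From Stdlib Require Import ZArith Reals List Lia Lra Psatz FinFun Znumtheory Classical.
Import ListNotations.
Open Scope Z_scope.


Lemma zrange_In k x : 0 <= k -> (In x (zrange k) <-> -k <= x <= k).
Proof.
  intros Hk. unfold zrange. rewrite in_map_iff. split.
  - intros [i [<- Hi]]. apply in_seq in Hi. lia.
  - intros H. exists (Z.to_nat (x + k)). split. lia. apply in_seq. lia.
Qed.

Lemma zrange_NoDup k : NoDup (zrange k).
Proof.
  unfold zrange. apply Injective_map_NoDup. intros i j E. lia. apply seq_NoDup.
Qed.

Lemma NoDup_prod {A B : Type} (l1 : list A) (l2 : list B) :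
  NoDup l1 -> NoDup l2 -> NoDup (list_prod l1 l2).
Proof.
  intros H1 H2. induction H1 as [|a l1 Ha Hl IH]; simpl. constructor.
  apply NoDup_app; auto.
  - apply Injective_map_NoDup; auto. intros x y E. now inversion E.
  - intros [u v] Hin Hin2. apply in_map_iff in Hin. destruct Hin as [w [E _]].
    inversion E; subst. apply in_prod_iff in Hin2. tauto.
Qed.

Lemma r3_scale n K : 0 <= n -> 1 <= K -> (r3 n <= r3 (K*K*n))%nat.
Proof.
  intros Hn HK. unfold r3.
  set (g := fun t : Z*Z*Z => let '(x,y,z) := t in (K*x, K*y, K*z)).
  set (L1 := filter _ _).
  set (L2 := filter _ _).
  assert (HN : NoDup L1).
  { apply NoDup_filter. repeat apply NoDup_prod; apply zrange_NoDup. }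
  rewrite <- (length_map g L1).
  apply NoDup_incl_length.
  - apply Injective_map_NoDup; auto.
    intros [[x y] z] [[x' y'] z'] E. simpl in E. inversion E.
    assert (x = x') by nia. assert (y = y') by nia. assert (z = z') by nia. now subst.
  - intros t Ht. apply in_map_iff in Ht. destruct Ht as [[[x y] z] [<- Ht]].
    unfold L1 in Ht. apply filter_In in Ht. destruct Ht as [Hin Heq].
    apply Z.eqb_eq in Heq.
    apply in_prod_iff in Hin. destruct Hin as [Hin Hz]. apply in_prod_iff in Hin.
    destruct Hin as [Hx Hy].
    apply zrange_In in Hx; auto. apply zrange_In in Hy; auto. apply zrange_In in Hz; auto.
    unfold L2. apply filter_In. simpl. split.
    + assert (0 <= K*K*n) by nia.
      apply in_prod_iff; split; [apply in_prod_iff; split|]; apply zrange_In; auto; nia.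
    + apply Z.eqb_eq. nia.
Qed.


Lemma eqmZ m A B : 0 < m -> (A mod m = B mod m <-> (m | A - B)).
Proof.
  intros Hm. split.
  - intros H. pose proof (Z_div_mod_eq_full A m). pose proof (Z_div_mod_eq_full B m).
    exists (A / m - B / m). rewrite H in *. lia.
  - intros [t Ht]. replace A with (B + t * m) by lia. apply Z_mod_plus_full.
Qed.

Lemma strip_aux (n : nat) : forall x, 1 <= x <= Z.of_nat n ->
  exists d s, 1 <= d /\ 1 <= s /\ x = d*d*s /\ squarefree s.
Proof.
  induction n as [|n IH]; intros x Hx. lia.
  destruct (classic (squarefree x)) as [Hs|Hs].
  - exists 1, x. repeat split; try lia; auto.
  - unfold squarefree in Hs. apply not_all_ex_not in Hs. destruct Hs as [q Hq].
    apply imply_to_and in Hq. destruct Hq as [[t Ht] Hq1].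
    assert (q*q <> 0). { intro E. rewrite E in Ht. lia. }
    assert (2 <= q*q) by nia.
    assert (1 <= t) by nia.
    assert (t < x) by nia.
    destruct (IH t ltac:(lia)) as [d [s [Hd [Hs1 [Ht2 Hsf]]]]].
    exists (Z.abs q * d), s. repeat split; auto.
    + assert (1 <= Z.abs q) by lia. nia.
    + assert (Z.abs q * Z.abs q = q * q) by (destruct (Z.abs_spec q); nia). nia.
Qed.

Lemma strip x : 1 <= x -> exists d s, 1 <= d /\ 1 <= s /\ x = d*d*s /\ squarefree s.
Proof. intros Hx. apply (strip_aux (Z.to_nat x)). lia. Qed.

Lemma DC_aux (n : nat) : forall D w1 w2 w3 s, 0 < D -> D <= Z.of_nat n ->
  w1*w1 + w2*w2 + w3*w3 = s*(D*D) -> exists y1 y2 y3, s = y1*y1 + y2*y2 + y3*y3.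
Proof.
  induction n as [|n IH]; intros D w1 w2 w3 s HD HDn Heq. lia.
  set (u1 := (2*w1 + D) / (2*D)). set (u2 := (2*w2 + D) / (2*D)).
  set (u3 := (2*w3 + D) / (2*D)).
  assert (B1 : -D <= 2*(w1 - D*u1) <= D).
  { pose proof (Z_div_mod_eq_full (2*w1+D) (2*D)) as E1. pose proof (Z.mod_pos_bound (2*w1+D) (2*D) ltac:(lia)) as E2. fold u1 in E1. lia. }
  assert (B2 : -D <= 2*(w2 - D*u2) <= D).
  { pose proof (Z_div_mod_eq_full (2*w2+D) (2*D)) as E1. pose proof (Z.mod_pos_bound (2*w2+D) (2*D) ltac:(lia)) as E2. fold u2 in E1. lia. }
  assert (B3 : -D <= 2*(w3 - D*u3) <= D).
  { pose proof (Z_div_mod_eq_full (2*w3+D) (2*D)) as E1. pose proof (Z.mod_pos_bound (2*w3+D) (2*D) ltac:(lia)) as E2. fold u3 in E1. lia. }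
  set (r1 := w1 - D*u1) in *. set (r2 := w2 - D*u2) in *. set (r3 := w3 - D*u3) in *.
  set (D' := s*D - 2*(w1*u1 + w2*u2 + w3*u3) + D*(u1*u1+u2*u2+u3*u3)).
  assert (HQ : r1*r1 + r2*r2 + r3*r3 = D*D').
  { assert (r1*r1 + r2*r2 + r3*r3 - D*D' = w1*w1 + w2*w2 + w3*w3 - s*(D*D))
      by (unfold r1, r2, r3, D'; ring). lia. }
  assert (HD'0 : 0 <= D') by nia.
  destruct (Z.eq_dec D' 0) as [E|E].
  - rewrite E in HQ. assert (r1 = 0) by nia. assert (r2 = 0) by nia. assert (r3 = 0) by nia.
    exists u1, u2, u3.
    assert (D*D*(s - (u1*u1+u2*u2+u3*u3)) = 0).
    { assert (Hw1 : w1 = D*u1) by (unfold r1 in *; lia). assert (Hw2 : w2 = D*u2) by (unfold r2 in *; lia).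
      assert (Hw3 : w3 = D*u3) by (unfold r3 in *; lia). rewrite Hw1, Hw2, Hw3 in Heq. nia. }
    apply Z.mul_eq_0 in H2. destruct H2; nia.
  - assert (4*(r1*r1 + r2*r2 + r3*r3) <= 3*(D*D)) by nia.
    assert (D' < D) by nia.
    set (c := u1*u1+u2*u2+u3*u3 - s).
    apply (IH D' (D'*u1 + c*r1) (D'*u2 + c*r2) (D'*u3 + c*r3) s); [lia|lia|].
    assert (E2 : (D'*u1 + c*r1)*(D'*u1 + c*r1) + (D'*u2 + c*r2)*(D'*u2 + c*r2)
                 + (D'*u3 + c*r3)*(D'*u3 + c*r3)
               = D'*D'*(u1*u1+u2*u2+u3*u3) + 2*D'*c*(u1*r1+u2*r2+u3*r3)
                 + c*c*(r1*r1 + r2*r2 + r3*r3)) by ring.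
    rewrite E2, HQ. unfold c, D', r1, r2, r3. ring.
Qed.

Lemma DC D w1 w2 w3 s : 0 < D -> w1*w1 + w2*w2 + w3*w3 = s*(D*D) ->
  exists y1 y2 y3, s = y1*y1 + y2*y2 + y3*y3.
Proof. intros. apply (DC_aux (Z.to_nat D) D w1 w2 w3 s); auto; lia. Qed.

Lemma prime_div_aux (k : nat) : forall n, 1 < n <= Z.of_nat k -> exists p, prime p /\ (p | n).
Proof.
  induction k as [|k IH]; intros n Hn. lia.
  destruct (prime_dec n) as [Hp|Hp].
  - exists n. split; auto. apply Z.divide_refl.
  - destruct (not_prime_divide n ltac:(lia) Hp) as [n0 [Hn0 Hd]].
    destruct (IH n0 ltac:(lia)) as [p [Hp1 Hp2]]. exists p. split; auto.
    eapply Z.divide_trans; eauto.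
Qed.

Lemma prime_div n : 1 < n -> exists p, prime p /\ (p | n).
Proof. intros. apply (prime_div_aux (Z.to_nat n)). lia. Qed.

Lemma coprime_bezout q m : m <> 0 -> (forall p, prime p -> (p | q) -> (p | m) -> False) ->
  exists i j, i*q + j*m = 1.
Proof.
  intros Hm H. pose proof (Z.gcd_nonneg q m).
  destruct (Z.eq_dec (Z.gcd q m) 1) as [E|E].
  - pose proof (Zgcd_is_gcd q m) as G. rewrite E in G.
    destruct (Zis_gcd_bezout _ _ _ G) as [u v Huv]. exists u, v. lia.
  - destruct (Z.eq_dec (Z.gcd q m) 0) as [E0|E0].
    + apply Z.gcd_eq_0 in E0. lia.
    + destruct (prime_div (Z.gcd q m) ltac:(lia)) as [p [Hp Hpd]].
      exfalso. apply (H p Hp).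
      * eapply Z.divide_trans; eauto. apply Z.gcd_divide_l.
      * eapply Z.divide_trans; eauto. apply Z.gcd_divide_r.
Qed.


Lemma sum3_sq m a : sum3sq_mod m a <-> exists z1 z2 z3, (z1*z1+z2*z2+z3*z3) mod m = a mod m.
Proof.
  unfold sum3sq_mod. split; intros [z1 [z2 [z3 H]]]; exists z1, z2, z3;
  rewrite <- H; f_equal; ring.
Qed.

Lemma final_strip m a x k : 0 < m -> 1 <= x <= m -> sum3sq_mod m x ->
  (forall q p, (q*q | x) -> prime p -> (p | q) -> (p | m) -> False) ->
  (k*k*x) mod m = a mod m ->
  exists a' K, squarefree a' /\ 1 <= a' <= m /\ sum3sq_mod m a' /\
    1 <= K <= 2*m /\ (K*K*a') mod m = a mod m.
Proof.
  intros Hm Hx Hs HP Hk.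
  destruct (strip x ltac:(lia)) as [d [a' [Hd [Ha' [Hxe Hsf]]]]].
  destruct (coprime_bezout d m ltac:(lia)) as [i [j Hij]].
  { intros p Hp H1 H2. apply (HP d p); auto. exists a'. lia. }
  exists a', ((k*d) mod m + m). repeat split; auto.
  - assert (1 <= d*d) by nia. nia.
  - apply sum3_sq in Hs. destruct Hs as [w1 [w2 [w3 Hw]]].
    apply sum3_sq. exists (i*w1), (i*w2), (i*w3).
    rewrite (eqmZ _ _ _ Hm) in Hw. apply (eqmZ _ _ _ Hm). destruct Hw as [t Ht].
    exists (i*i*t + a'*(j*j*m - 2*j)).
    assert (i*d = 1 - j*m) by lia.
    assert (E : i*w1*(i*w1) + i*w2*(i*w2) + i*w3*(i*w3) - a'
       = i*i*(w1*w1+w2*w2+w3*w3 - x) + a'*((i*d)*(i*d) - 1)) by (rewrite Hxe; ring).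
    rewrite E, Ht, H. ring.
  - pose proof (Z.mod_pos_bound (k*d) m Hm). lia.
  - pose proof (Z.mod_pos_bound (k*d) m Hm). lia.
  - rewrite (eqmZ _ _ _ Hm) in Hk. apply (eqmZ _ _ _ Hm). destruct Hk as [t Ht].
    pose proof (Z_div_mod_eq_full (k*d) m) as E.
    set (r := (k*d) mod m) in *. set (qq := (k*d) / m) in *.
    exists (t + a'*((r+m+k*d)*(1 - qq))).
    assert (E2 : (r + m) * (r + m) * a' - a = (k*k*x - a) + a'*((r+m) - k*d)*((r+m) + k*d))
      by (rewrite Hxe; ring).
    rewrite E2, Ht. assert (r + m - k*d = m*(1 - qq)) by lia. rewrite H. ring.
Qed.


Lemma Zmul_div_mono a b c d : (a | b) -> (c | d) -> (a*c | b*d).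
Proof. intros [x Hx] [y Hy]. exists (x*y). subst. ring. Qed.

Lemma sqfree_prime s p : squarefree s -> prime p -> (p*p | s) -> False.
Proof. intros H Hp Hd. apply H in Hd. pose proof (prime_ge_2 p Hp). nia. Qed.

Ltac closeit0 P e := match goal with |- ?L = ?R =>
  let H := fresh in let He := fresh in assert (H : L - R = P * e) by ring;
  assert (He : e = 0) by lia; rewrite He in H; lia end.

Lemma nt_main m a : 0 < m -> sum3sq_mod m a ->
  exists a' K, squarefree a' /\ 1 <= a' <= m /\ sum3sq_mod m a' /\
    1 <= K <= 2*m /\ (K*K*a') mod m = a mod m.
Proof.
  intros Hm Ha. apply sum3_sq in Ha. destruct Ha as [z1 [z2 [z3 Hz]]].
  set (N := z1*z1+z2*z2+z3*z3) in *.
  destruct (Z.eq_dec N 0) as [E|E].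
  - exists 1, m. repeat split; try lia.
    + intros d Hd. apply Z.divide_1_r_nonneg in Hd; nia.
    + exists 1, 0, 0. reflexivity.
    + rewrite <- Hz, E. rewrite Z.mul_1_r, Z.mod_mul by lia. reflexivity.
  - assert (HN : 1 <= N) by (unfold N in *; nia).
    destruct (strip N HN) as [d [s [Hd [Hs1 [HNe Hsf]]]]].
    destruct (DC d z1 z2 z3 s ltac:(lia) ltac:(fold N; lia)) as [y1 [y2 [y3 Hy]]].
    set (g := Z.gcd s m).
    assert (Hg0 : 0 < g).
    { pose proof (Z.gcd_nonneg s m). assert (g <> 0) by (intro H0; apply Z.gcd_eq_0 in H0; lia). lia. }
    assert (Hgs : (g | s)) by apply Z.gcd_divide_l.
    assert (Hgm : (g | m)) by apply Z.gcd_divide_r.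
    set (m1 := m / g).
    assert (Hm1 : m = g * m1) by (apply Zdivide_Zdiv_eq; auto).
    set (h := Z.gcd g m1).
    assert (Hh0 : 0 < h).
    { pose proof (Z.gcd_nonneg g m1). assert (h <> 0) by (intro H0; apply Z.gcd_eq_0 in H0; lia). lia. }
    assert (Hhg : (h | g)) by apply Z.gcd_divide_l.
    assert (Hhm1 : (h | m1)) by apply Z.gcd_divide_r.
    set (M2 := g / h).
    assert (HgM2 : g = h * M2) by (apply Zdivide_Zdiv_eq; auto).
    set (M1 := m1 * h).
    assert (HmM : m = M1 * M2) by (unfold M1; rewrite Hm1, HgM2; ring).
    assert (HM2s : (M2 | s)). { eapply Z.divide_trans; [|exact Hgs]. exists h. lia. }
    destruct HM2s as [s' Hs'].
    assert (Hpm1 : forall p, prime p -> (p | M1) -> (p | m1)).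
    { intros p Hp H. unfold M1 in H. apply prime_mult in H; auto. destruct H; auto.
      eapply Z.divide_trans; eauto. }
    destruct (coprime_bezout M1 M2 ltac:(nia)) as [u [v Huv]].
    { intros p Hp H1 H2. apply (Hpm1 p Hp) in H1.
      assert (p | g) by (rewrite HgM2; apply Z.divide_mul_r; auto).
      assert (p | h) by (apply Z.gcd_greatest; auto).
      apply (sqfree_prime s p Hsf Hp). eapply Z.divide_trans; [|exact Hgs].
      rewrite HgM2. apply Zmul_div_mono; auto. }
    set (x := s*v*M2 + u*M1).
    set (x2 := (x - 1) mod m + 1).
    pose proof (Z_div_mod_eq_full (x-1) m) as Ex.
    pose proof (Z.mod_pos_bound (x-1) m Hm) as Bx.
    assert (Hxx : x2 - x = - (M1*M2) * ((x-1)/m)) by (unfold x2; rewrite <- HmM; lia).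
    apply (final_strip m a x2 (d*v*M2)); auto.
    + unfold x2. lia.
    + apply sum3_sq. exists (y1*v*M2 + u*M1), (y2*v*M2), (y3*v*M2).
      apply (eqmZ _ _ _ Hm). rewrite HmM.
      exists (-s*v*u - u*v + 2*y1*v*u + (x-1)/m).
      assert (E1 : (y1 * v * M2 + u * M1) * (y1 * v * M2 + u * M1) + y2 * v * M2 * (y2 * v * M2) +
                   y3 * v * M2 * (y3 * v * M2) - x2
                 = s*((v*M2)*(v*M2) - v*M2) + (u*M1)*(u*M1) - u*M1
                   + 2*y1*v*M2*u*M1 - (x2 - x)) by (unfold x; rewrite Hy; ring).
      rewrite E1, Hxx.
      closeit0 (s*v*M2 + u*M1) (u*M1+v*M2-1).
    + intros q p Hq Hp Hpq Hpm.
      assert (Hpp : (p*p | x2)).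
      { eapply Z.divide_trans; [|exact Hq]. apply Zmul_div_mono; auto. }
      assert (HxsM1 : (M1 | x2 - s)).
      { exists (- s*u + u - M2*((x-1)/m)).
        assert (x2 - s = (x2 - x) + (x - s)) by ring. rewrite H, Hxx.
        unfold x. closeit0 s (u*M1+v*M2-1). }
      assert (Hx1M2 : (M2 | x2 - 1)).
      { exists (s*v - v - M1*((x-1)/m)).
        assert (x2 - 1 = (x2 - x) + (x - 1)) by ring. rewrite H, Hxx.
        unfold x. closeit0 1 (u*M1+v*M2-1). }
      pose proof (prime_ge_2 p Hp).
      assert (Hpx : (p | x2)) by (eapply Z.divide_trans; [|exact Hpp]; apply Z.divide_factor_l).
      rewrite HmM in Hpm. apply prime_mult in Hpm; auto. destruct Hpm as [H1|H1].
      * pose proof (Hpm1 p Hp H1) as Hp1.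
        destruct (classic (p | s)) as [Hps|Hps].
        -- assert (p | g). { apply Z.gcd_greatest. exact Hps. rewrite Hm1. apply Z.divide_mul_r. exact Hp1. }
           assert (p | h) by (apply Z.gcd_greatest; auto).
           assert (Hpp2 : (p*p | M1)) by (apply Zmul_div_mono; auto).
           apply (sqfree_prime s p Hsf Hp).
           assert (p*p | x2 - s) by (eapply Z.divide_trans; [exact Hpp2|exact HxsM1]).
           replace s with (x2 - (x2 - s)) by ring. apply Z.divide_sub_r; auto.
        -- apply Hps. assert (p | x2 - s) by (eapply Z.divide_trans; [exact H1|exact HxsM1]).
           replace s with (x2 - (x2 - s)) by ring. apply Z.divide_sub_r; auto.
      * assert (p | x2 - 1) by (eapply Z.divide_trans; [exact H1|exact Hx1M2]).
        assert (p | 1). { replace 1 with (x2 - (x2 - 1)) by ring. apply Z.divide_sub_r; auto. }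
        apply Z.divide_1_r_nonneg in H2; lia.
    + rewrite <- Hz. apply (eqmZ _ _ _ Hm).
      rewrite HmM.
      exists (d*d*v*v*M2*M2*(-((x-1)/m)) + d*d*u*(v*v*M2 - s'*((v*M2)*(v*M2) + v*M2 + 1))).
      assert (E1 : d*v*M2*(d*v*M2)*x2 - N = d*v*M2*(d*v*M2)*(x2 - x)
                 + d*d*((v*M2)*(v*M2)*x - s)) by (rewrite HNe; unfold x; ring).
      rewrite E1, Hxx. unfold x. rewrite Hs'.
      closeit0 (d*d*s'*M2*((v*M2)*(v*M2) + v*M2 + 1)) (u*M1+v*M2-1).
Qed.


Lemma ln_le (x y : R) : (0 < x)%R -> (x <= y)%R -> (ln x <= ln y)%R.
Proof.
  intros Hx Hxy. destruct (Rle_lt_or_eq_dec _ _ Hxy) as [H|H].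
  - left. apply ln_increasing; auto.
  - subst; lra.
Qed.

Lemma lnln_bound (k X : R) : (1 <= k)%R -> (k*k <= X)%R -> (9 <= X)%R ->
  (ln (ln (k*k*X)) <= 2 * ln (ln X))%R /\ (0 <= ln (ln X))%R.
Proof.
  intros Hk HkX HX.
  assert (He : (exp 2 <= 9)%R).
  { replace 2%R with (1+1)%R by ring. rewrite exp_plus.
    pose proof exp_le_3. pose proof (exp_pos 1). nra. }
  assert (HlX : (2 <= ln X)%R).
  { rewrite <- (ln_exp 2). apply ln_le. apply exp_pos. lra. }
  assert (Hl2 : (0 < ln 2)%R). { rewrite <- ln_1. apply ln_increasing; lra. }
  assert (Hll : (ln 2 <= ln (ln X))%R). { apply ln_le; lra. }
  split; [|lra].
  assert (Hk2 : (1 <= k*k)%R) by nra.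
  assert (H1 : (ln (k*k*X) <= 2 * ln X)%R).
  { rewrite ln_mult by nra. assert (ln (k*k) <= ln X)%R by (apply ln_le; nra). lra. }
  assert (H0 : (ln X <= ln (k*k*X))%R) by (apply ln_le; nra).
  assert (H2 : (ln (ln (k*k*X)) <= ln (2 * ln X))%R) by (apply ln_le; lra).
  rewrite (ln_mult 2 (ln X)) in H2 by lra. lra.
Qed.

Lemma scale_large m a a' K : 0 < m -> 1 <= K <= 2*m -> (K*K*a') mod m = a mod m ->
  forall c, (0 < c)%R -> inf_many_large m a' c -> inf_many_large m a (c / (4 * IZR m)).
Proof.
  intros Hm HK Hmod c Hc H N.
  destruct (H (Z.max N (Z.max (K*K) 9))) as [n' [Hn'1 [Hn'2 [Hn'3 Hn'4]]]].
  exists (K*K*n'). repeat split.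
  - nia.
  - nia.
  - rewrite <- Z.mul_mod_idemp_r by lia. rewrite Hn'3. rewrite Z.mul_mod_idemp_r by lia. exact Hmod.
  - pose proof (r3_scale n' K ltac:(lia) ltac:(lia)) as Hr.
    apply le_INR in Hr.
    set (X := IZR n') in *. set (k := IZR K).
    assert (HX9 : (9 <= X)%R) by (unfold X; apply IZR_le; lia).
    assert (HkX : (k*k <= X)%R) by (unfold X, k; rewrite <- mult_IZR; apply IZR_le; lia).
    assert (Hk1 : (1 <= k)%R) by (unfold k; apply IZR_le; lia).
    assert (Hk2 : (k <= 2 * IZR m)%R) by (unfold k; rewrite <- mult_IZR; apply IZR_le; lia).
    assert (Hmr : (0 < IZR m)%R) by (apply IZR_lt; lia).
    destruct (lnln_bound k X Hk1 HkX HX9) as [Hl1 Hl2].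
    rewrite !mult_IZR. fold k X.
    assert (Hs : sqrt (k*k*X) = (k * sqrt X)%R).
    { rewrite sqrt_mult by nra. rewrite sqrt_square by lra. reflexivity. }
    rewrite Hs.
    assert (HS : (0 <= sqrt X)%R) by apply sqrt_pos.
    set (S := sqrt X) in *. set (L := ln (ln X)) in *. set (L2 := ln (ln (k*k*X))) in *.
    assert (Hal : (0 <= c / (4 * IZR m) * k)%R).
    { apply Rmult_le_pos; [|lra]. apply Rlt_le, Rdiv_lt_0_compat; lra. }
    assert (Ha2 : (c / (4 * IZR m) * k <= c / 2)%R).
    { unfold Rdiv. apply (Rmult_le_reg_r (4 * IZR m)). lra.
      field_simplify; try lra. nra. }
    assert (E : (c / (4 * IZR m) * (k * S) * L2 = (c / (4 * IZR m) * k) * S * L2)%R) by ring.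
    rewrite E.
    apply Rle_ge. apply Rge_le in Hn'4.
    assert ((c / (4 * IZR m) * k) * S * L2 <= (c / (4 * IZR m) * k) * S * (2*L))%R.
    { apply Rmult_le_compat_l; [apply Rmult_le_pos|]; lra. }
    assert ((c / (4 * IZR m) * k) * S * (2*L) <= (c/2) * S * (2*L))%R.
    { apply Rmult_le_compat_r; [lra|]. apply Rmult_le_compat_r; lra. }
    lra.
Qed.


Theorem lemma3p1 :
  forall m : Z, 0 < m ->
  exists cfun : R -> R,
    (forall c : R, (0 < c)%R -> (0 < cfun c)%R) /\
    forall a : Z, 0 <= a < m -> sum3sq_mod m a ->
      exists a' : Z,
        squarefree a' /\ 1 <= a' <= 5 * m /\ sum3sq_mod m a' /\
        forall c : R, (0 < c)%R ->
          inf_many_large m a' c -> inf_many_large m a (cfun c).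
Proof.
  intros m Hm. exists (fun c => (c / (4 * IZR m))%R). split.
  - intros c Hc. assert (0 < IZR m)%R by (apply IZR_lt; lia).
    apply Rdiv_lt_0_compat; lra.
  - intros a Ha Hs. destruct (nt_main m a Hm Hs) as [a' [K [H1 [H2 [H3 [H4 H5]]]]]].
    exists a'. split; [auto|]. split; [lia|]. split; [auto|].
    intros c Hc. apply (scale_large m a a' K); auto.
Qed.
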